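(* Let $T$ be a causal theory with explainable symbols $\mathbf{p}$ all of whose rules are D-rules, let $\Pi$ be the conjunction of $\mathrm{tr}_d[R]$ over all rules $R$ of $T$, and let $CC$ be the conjunction of the completeness constraints for $\mathbf{p}$. Then $\mathrm{SM}_{\mathbf{p}\widehat{\mathbf{p}}}[\Pi\land CC]\models T\land CC$.
   Context: A causal theory $T$ consists of a list $\mathbf{p}$ of distinct predicate constants (explainable symbols, not equality) and a finite set of causal rules $F\Leftarrow G$. With predicate variables $u_p$ ($p\in\mathbf{p}$), list $\mathbf{u}$, $T^\dagger(\mathbf{u})$ is the conjunction of $\forall\mathbf{x}(G\to F^{\mathbf{p}}_{\mathbf{u}})$ over the rules ($\mathbf{x}$ the free variables, $F^{\mathbf{p}}_{\mathbf{u}}$ replaces each $p$ by $u_p$), and $T$ is identified with the sentence $\forall\mathbf{u}(T^\dagger(\mathbf{u})\leftrightarrow(\mathbf{u}=\mathbf{p}))$, where $\mathbf{u}=\mathbf{p}$ is $\bigwedge_p\forall\mathbf{x}(u_p(\mathbf{x})\leftrightarrow p(\mathbf{x}))$. A D-rule has the form $\bigvee_{A\in Pos}A\lor\bigvee_{A\in Neg}\neg A\Leftarrow G$ with $Pos,Neg$ finite sets of atoms with predicates in $\mathbf{p}$ and $G$ without $\to$. For $p\in\mathbf{p}$, $\widehat p$ is a new predicate constant of the same arity; for $A=p(\mathbf{t})$, $\widehat A=\widehat p(\mathbf{t})$. $\mathrm{tr}_d$ of the D-rule is $\widetilde\forall\big(\neg\neg G\land\bigwedge_{A\in Pos}(\widehat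 A\lor\neg\widehat A)\land\bigwedge_{A\in Neg}(A\lor\neg A)\to\bigvee_{A\in Pos}A\lor\bigvee_{A\in Neg}\widehat A\big)$ ($\widetilde\forall$ = universal closure). $CC$ is the conjunction over $p\in\mathbf{p}$ of $\forall\mathbf{x}\neg(p(\mathbf{x})\land\widehat p(\mathbf{x}))$ and $\forall\mathbf{x}\neg(\neg p(\mathbf{x})\land\neg\widehat p(\mathbf{x}))$. For a logic program $F$ (conjunction of sentences $\widetilde\forall(F_1\to F_2)$ with no other $\to$), $\mathrm{SM}_{\mathbf{p}\widehat{\mathbf{p}}}[F]$ is $F\land\neg\exists\mathbf{u}\widehat{\mathbf{u}}\big(((\mathbf{u},\widehat{\mathbf{u}})<(\mathbf{p},\widehat{\mathbf{p}}))\land F^\diamond(\mathbf{u},\widehat{\mathbf{u}})\big)$, where $\widehat{\mathbf{u}}=(\widehat u_p)$ are further predicate variables, $F^\diamond$ replaces each occurrence of $p$ / $\widehat p$ not in the scope of $\neg$ by $u_p$ / $\widehat u_p$, $p\le q$ is $\forall\mathbf{x}(p(\mathbf{x})\to q(\mathbf{x}))$ (componentwise for tuples) and $\mathbf{a}<\mathbf{b}$ is $(\mathbf{a}\le\mathbf{b})\land\neg(\mathbf{b}\le\mathbf{a})$. $\models$ is classical (second-order) entailment. *)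

(* Defs.v *)
From mathcomp Require Import all_boot.
From Stdlib Require List.

Set Implicit Arguments.
Unset Strict Implicit.
Unset Printing Implicit Defensive.

Section Syntax.
(* function constants (object constants are 0-ary function constants) *)
Variables (Fn : Type) (far : Fn -> nat).

Inductive term : Type :=
| Var of nat
| App (f : Fn) of ('I_(far f) -> term).

Variables (S : Type) (sar : S -> nat).

(* negation is a primitive connective (so that "without ->" and "not in the
   scope of negation" are syntactic notions, as in the paper). *)
Inductive formula : Type :=
| FBot
| FTop
| FAtom (s : S) of ('I_(sar s) -> term)
| FEq of term & term
| FNeg of formula
| FAnd of formula & formula
| FOr of formula & formula
| FImp of formula & formula
| FAll of nat & formula
| FEx of nat & formula.

Fixpoint noImp (phi : formula) : bool :=
  match phi with
  | FBot | FTop | FAtom _ _ | FEq _ _ => true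
  | FNeg f => noImp f
  | FAnd a b | FOr a b => noImp a && noImp b
  | FImp _ _ => false
  | FAll _ f | FEx _ f => noImp f
  end.

Definition bigAnd (l : seq formula) : formula := foldr FAnd FTop l.
Definition bigOr (l : seq formula) : formula := foldr FOr FBot l.

Record atom := Atm { apred : S; aargs : 'I_(sar apred) -> term }.

Definition atomF (a : atom) : formula := @FAtom (apred a) (@aargs a).

End Syntax.

Section Semantics.
Variables (Fn : Type) (far : Fn -> nat) (S : Type) (sar : S -> nat) (D : Type).

Definition finterp := forall f : Fn, ('I_(far f) -> D) -> D.
(* interpretation (or value of a list of predicate variables) of the
   predicate symbols: an (sar s)-ary relation for each s *)
Definition pinterp := forall s : S, ('I_(sar s) -> D) -> Prop.

Fixpoint teval (If : finterp) (e : nat -> D) (t : term far) : D :=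
  match t with
  | Var x => e x
  | App f ts => If f (fun i => teval If e (ts i))
  end.

Definition upd (e : nat -> D) (x : nat) (d : D) : nat -> D :=
  fun y => if y == x then d else e y.

(* With Iout = Iin this is ordinary satisfaction; with
   Iout = I[p := u] and Iin = I it is the truth of F^diamond(u). *)
Fixpoint sat2 (If : finterp) (Iout Iin : pinterp) (e : nat -> D)
    (phi : formula far sar) : Prop :=
  match phi with
  | FBot => False
  | FTop => True
  | FAtom s ts => Iout s (fun i => teval If e (ts i))
  | FEq t1 t2 => teval If e t1 = teval If e t2
  | FNeg f => ~ sat2 If Iin Iin e f
  | FAnd a b => sat2 If Iout Iin e a /\ sat2 If Iout Iin e b
  | FOr a b => sat2 If Iout Iin e a \/ sat2 If Iout Iin e b
  | FImp a b => sat2 If Iout Iin e a -> sat2 If Iout Iin e b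
  | FAll x f => forall d, sat2 If Iout Iin (upd e x d) f
  | FEx x f => exists d, sat2 If Iout Iin (upd e x d) f
  end.

Definition sat (If : finterp) (I : pinterp) (e : nat -> D) (phi : formula far sar) :=
  sat2 If I I e phi.

Definition satc (If : finterp) (I : pinterp) (phi : formula far sar) :=
  forall e, sat If I e phi.

Definition satP (If : finterp) (I : pinterp) (F : seq (formula far sar)) :=
  forall phi, List.In phi F -> satc If I phi.

Definition pupd (I u : pinterp) (q : pred S) : pinterp :=
  fun s x => if q s then u s x else I s x.

Definition ple (q : pred S) (u v : pinterp) :=
  forall s, q s -> forall x, u s x -> v s x.
Definition plt (q : pred S) (u v : pinterp) := ple q u v /\ ~ ple q v u.
Definition peq (q : pred S) (u v : pinterp) :=
  forall s, q s -> forall x, u s x <-> v s x.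

Definition SM (If : finterp) (I : pinterp) (q : pred S) (F : seq (formula far sar)) :=
  satP If I F /\
  ~ (exists u : pinterp, plt q u I /\
       forall phi, List.In phi F -> forall e, sat2 If (pupd I u q) I e phi).

End Semantics.

Section Causal.
Variables (Fn : Type) (far : Fn -> nat) (P : eqType) (par : P -> nat).

(* D-rule  \/Pos A \/ \/Neg ~A <= G *)
Record drule := DRule {
  dpos : seq (atom far par);
  dneg : seq (atom far par);
  dbody : formula far par }.

Definition dhead (R : drule) : formula far par :=
  FOr (bigOr [seq atomF a | a <- dpos R]) (bigOr [seq FNeg (atomF a) | a <- dneg R]).

Definition is_Drule (ps : seq P) (R : drule) : Prop :=
  (forall a, List.In a (dpos R) -> apred a \in ps) /\
  (forall a, List.In a (dneg R) -> apred a \in ps) /\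
  noImp (dbody R).

Definition causal_dagger (D : Type) (If : finterp far D) (I u : pinterp par D)
    (ps : seq P) (T : seq drule) : Prop :=
  forall R, List.In R T -> forall e,
    sat If I e (dbody R) -> sat If (pupd I u (fun p => p \in ps)) e (dhead R).

Definition causal_sat (D : Type) (If : finterp far D) (I : pinterp par D)
    (ps : seq P) (T : seq drule) : Prop :=
  forall u : pinterp par D,
    causal_dagger If I u ps T <-> peq (fun p => p \in ps) u I.

(* extended signature: inl p = p, inr p = \hat p *)
Definition hsar (s : P + P) : nat := match s with inl p => par p | inr p => par p end.

Definition hatq (ps : seq P) : pred (P + P) :=
  fun s => match s with inl p => p \in ps | inr p => p \in ps end.

Fixpoint lift (phi : formula far par) : formula far hsar :=
  match phi with
  | FBot => FBot _ _
  | FTop => FTop _ _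
  | FAtom s ts => @FAtom _ _ _ hsar (inl s) ts
  | FEq t1 t2 => FEq _ t1 t2
  | FNeg f => FNeg (lift f)
  | FAnd a b => FAnd (lift a) (lift b)
  | FOr a b => FOr (lift a) (lift b)
  | FImp a b => FImp (lift a) (lift b)
  | FAll x f => FAll x (lift f)
  | FEx x f => FEx x (lift f)
  end.

Definition liftA (a : atom far par) : formula far hsar :=
  @FAtom _ _ _ hsar (inl (apred a)) (@aargs _ _ _ _ a).
Definition hatA (a : atom far par) : formula far hsar :=
  @FAtom _ _ _ hsar (inr (apred a)) (@aargs _ _ _ _ a).

(* tr_d of a D-rule (its universal closure is taken by satc / SM) *)
Definition trd (R : drule) : formula far hsar :=
  FImp
    (FAnd (FNeg (FNeg (lift (dbody R))))
      (FAnd (bigAnd [seq FOr (hatA a) (FNeg (hatA a)) | a <- dpos R])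
            (bigAnd [seq FOr (liftA a) (FNeg (liftA a)) | a <- dneg R])))
    (FOr (bigOr [seq liftA a | a <- dpos R]) (bigOr [seq hatA a | a <- dneg R])).

Definition vars (n : nat) : 'I_n -> term far := fun i => Var far (nat_of_ord i).

Definition CC1 (p : P) : formula far hsar :=
  FNeg (FAnd (@FAtom _ _ _ hsar (inl p) (@vars (par p)))
             (@FAtom _ _ _ hsar (inr p) (@vars (par p)))).
Definition CC2 (p : P) : formula far hsar :=
  FNeg (FAnd (FNeg (@FAtom _ _ _ hsar (inl p) (@vars (par p))))
             (FNeg (@FAtom _ _ _ hsar (inr p) (@vars (par p))))).

Definition CC (ps : seq P) : seq (formula far hsar) :=
  flatten [seq [:: CC1 p; CC2 p] | p <- ps].

Definition PiD (T : seq drule) : seq (formula far hsar) := [seq trd R | R <- T].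

End Causal.

(* Main.v *)
Require Import Defs.
From mathcomp Require Import all_boot.
From Stdlib Require List.
From Stdlib Require Import Classical FunctionalExtensionality.

Set Implicit Arguments.
Unset Strict Implicit.

Lemma In_cat (A : Type) (x : A) (s1 s2 : seq A) :
  List.In x (s1 ++ s2) <-> List.In x s1 \/ List.In x s2.
Proof. elim: s1 => [|a s IH] /=; [tauto| rewrite IH; tauto]. Qed.

Lemma In_map (A B : Type) (f : A -> B) (s : seq A) y :
  List.In y (map f s) <-> exists a, List.In a s /\ y = f a.
Proof.
elim: s => [|a s IH] /=; first by split=> [[]|[a [[]]]].
rewrite IH; split.
- case=> [<-|[b [Hb ->]]]; [exists a; auto| exists b; auto].
- case=> b [[<-|Hb] ->]; [left; auto| right; exists b; auto].
Qed.

Section S.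
Variables (Fn : Type) (far : Fn -> nat) (S : Type) (sar : S -> nat) (D : Type).
Variable (If : finterp far D).

Lemma sat2_bigOr (A : Type) (f : A -> formula far sar) l Io Ii e :
  sat2 If Io Ii e (bigOr (map f l)) <-> exists a, List.In a l /\ sat2 If Io Ii e (f a).
Proof.
elim: l => [|a l IH] /=; first by split=> [[]|[a [[]]]].
rewrite IH; split.
- case=> [H|[b [Hb H]]]; [exists a; auto| exists b; auto].
- case=> b [[<-|Hb] H]; [left; auto| right; exists b; auto].
Qed.

Lemma sat2_bigAnd (A : Type) (f : A -> formula far sar) l Io Ii e :
  sat2 If Io Ii e (bigAnd (map f l)) <-> forall a, List.In a l -> sat2 If Io Ii e (f a).
Proof.
elim: l => [|a l IH] /=; first by split.
rewrite IH; split.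
- case=> H1 H2 b [<-|Hb]; auto.
- move=> H; split; auto.
Qed.
End S.

Lemma sat2_lift (Fn : Type) (far : Fn -> nat) (P : eqType) (par : P -> nat) (D : Type)
  (If : finterp far D) (f : formula far par) :
  forall (Io Ii : pinterp (hsar par) D) e,
  sat2 If Io Ii e (Defs.lift f) <-> sat2 If (fun p => Io (inl p)) (fun p => Ii (inl p)) e f.
Proof.
elim: f => /=.
- by move=> *; split.
- by move=> *; split.
- by move=> *; split.
- by move=> *; split.
- move=> f IH Io Ii e; rewrite IH; tauto.
- move=> a IHa b IHb Io Ii e; rewrite IHa IHb; tauto.
- move=> a IHa b IHb Io Ii e; rewrite IHa IHb; tauto.
- move=> a IHa b IHb Io Ii e; rewrite IHa IHb; tauto.
- move=> x f IH Io Ii e; split=> H d; by apply/IH.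
- move=> x f IH Io Ii e; split=> [[d H]|[d H]]; exists d; by apply/IH.
Qed.

Lemma CC_in (Fn : Type) (far : Fn -> nat) (P : eqType) (par : P -> nat) ps p :
  p \in ps -> List.In (CC1 far par p) (CC far par ps) /\ List.In (CC2 far par p) (CC far par ps).
Proof.
elim: ps => [|a s IH] //=; rewrite in_cons => /orP [/eqP ->|H].
- rewrite /CC /=; auto.
- rewrite /CC /= -/(CC far par s); have [H1 H2] := IH H; auto.
Qed.

Lemma CC_neg (Fn : Type) (far : Fn -> nat) (P : eqType) (par : P -> nat) ps phi :
  List.In phi (CC far par ps) -> exists f, phi = FNeg f.
Proof.
elim: ps => [|a s IH] //=; rewrite /CC /= -/(CC far par s).
case=> [<-|[<-|H]]; last exact: IH.
- by eexists. - by eexists.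
Qed.

Lemma sat2_trd (Fn : Type) (far : Fn -> nat) (P : eqType) (par : P -> nat) (D : Type)
  (If : finterp far D) (R : drule far par) Io Ii e :
  sat2 If Io Ii e (trd R) <->
  ((~ ~ sat2 If Ii Ii e (Defs.lift (dbody R))) /\
    (sat2 If Io Ii e (bigAnd [seq FOr (hatA a) (FNeg (hatA a)) | a <- dpos R]) /\
     sat2 If Io Ii e (bigAnd [seq FOr (liftA a) (FNeg (liftA a)) | a <- dneg R])) ->
   sat2 If Io Ii e (bigOr [seq liftA a | a <- dpos R]) \/
   sat2 If Io Ii e (bigOr [seq hatA a | a <- dneg R])).
Proof. by []. Qed.

Lemma sat2_FOr (Fn : Type) (far : Fn -> nat) (S : Type) (sar : S -> nat) (D : Type)
  (If : finterp far D) Io Ii e (a b : formula far sar) :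
  sat2 If Io Ii e (FOr a b) <-> sat2 If Io Ii e a \/ sat2 If Io Ii e b.
Proof. by []. Qed.

Theorem lemma5
  (Fn : Type) (far : Fn -> nat) (P : eqType) (par : P -> nat)
  (ps : seq P) (Hps : uniq ps)
  (T : seq (drule far par)) (HT : forall R, List.In R T -> is_Drule ps R)
  (D : Type) (HD : inhabited D) (If : finterp far D) (I : pinterp (hsar par) D) :
  SM If I (hatq ps) (PiD T ++ CC far par ps) ->
  causal_sat If (fun p => I (inl p)) ps T /\ satP If I (CC far par ps).
Proof.
case: HD => d0.
move=> [HPi Hmin].
have HCC : satP If I (CC far par ps).
  by move=> phi Hphi; apply: HPi; apply/In_cat; right.
have HPi' : forall R, List.In R T -> forall e, sat If I e (trd R).
  by move=> R HR e; apply: HPi; apply/In_cat; left; apply/In_map; exists R.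
have Hcomp : forall p, p \in ps -> forall x, I (inr p) x <-> ~ I (inl p) x.
  move=> p Hp x.
  have [H1 H2] := CC_in far par Hp.
  pose e : nat -> D := fun n => match @insub nat (fun n => n < par p) _ n with
                                | Some i => x i | None => d0 end.
  have Hx : (fun i : 'I_(par p) => teval If e (@vars _ far (par p) i)) = x.
    apply: functional_extensionality => i /=.
    by rewrite /e (insubT (fun n => n < par p) (ltn_ord i)) /=; congr x; apply: val_inj.
  have := HCC _ H1 e; have := HCC _ H2 e; rewrite /sat /= Hx; tauto.
split; last exact HCC.
move=> u; split.
- move=> Hdag.
  pose v : pinterp (hsar par) D := fun s =>
    match s as s0 return ('I_(hsar par s0) -> D) -> Prop with
    | inl p => fun x => I (inl p) x /\ u p x
    | inr p => fun x => I (inr p) x /\ ~ u p x end.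
  have Hle : ple (hatq ps) v I by case=> p _ x /= [].
  have Hdiam : forall phi, List.In phi (PiD T ++ CC far par ps) ->
      forall e, sat2 If (pupd I v (hatq ps)) I e phi.
    move=> phi /In_cat [/In_map [R [HR ->]]|Hc] e.
    + have [Hpos [Hneg _]] := HT R HR.
      rewrite /trd /=; move=> [Hnn [/sat2_bigAnd Hp /sat2_bigAnd Hn]].
      have Hb : sat If (fun p => I (inl p)) e (dbody R).
        by apply: NNPP => Hb; apply: Hnn => /sat2_lift.
      have := Hdag R HR e Hb; rewrite /dhead /sat /=.
      case=> [/sat2_bigOr [a [Ha Hua]]|/sat2_bigOr [a [Ha Hua]]].
      * left; apply/sat2_bigOr; exists a; split=> //.
        move: Hua (Hp a Ha); rewrite /atomF /pupd /= (Hpos a Ha) => Hua.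
        rewrite (Hcomp _ (Hpos a Ha)); tauto.
      * right; apply/sat2_bigOr; exists a; split=> //.
        move: Hua (Hn a Ha); rewrite /atomF /pupd /= (Hneg a Ha) => Hua.
        rewrite (Hcomp _ (Hneg a Ha)); tauto.
    + have [f Hf] := CC_neg Hc; have := HCC _ Hc e; by rewrite Hf.
  have HIv : ple (hatq ps) I v.
    apply: NNPP => H; apply: Hmin; exists v; split; [split|]; auto.
  move=> p Hp x; split=> H.
  + apply: NNPP => Hn.
    have := HIv (inr p) Hp x; rewrite /= (Hcomp _ Hp); tauto.
  + by have [] := HIv (inl p) Hp x H.
- move=> Heq R HR e Hb.
  have [Hpos [Hneg _]] := HT R HR.
  have := HPi' R HR e; rewrite /sat => /sat2_trd H.
  have Hant : (~ ~ sat2 If I I e (Defs.lift (dbody R))) /\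
    (sat2 If I I e (bigAnd [seq FOr (hatA a) (FNeg (hatA a)) | a <- dpos R]) /\
     sat2 If I I e (bigAnd [seq FOr (liftA a) (FNeg (liftA a)) | a <- dneg R])).
    split; first by move=> Hn; apply: Hn; apply/sat2_lift.
    split; apply/sat2_bigAnd => a Ha /=; tauto.
  rewrite /sat /dhead; apply/sat2_FOr.
  case: (H Hant) => [/sat2_bigOr [a [Ha Hia]]|/sat2_bigOr [a [Ha Hia]]].
  * left; apply/sat2_bigOr; exists a; split=> //.
    rewrite /atomF /pupd /= (Hpos a Ha); exact: (proj2 (Heq _ (Hpos a Ha) _) Hia).
  * right; apply/sat2_bigOr; exists a; split=> //.
    move: Hia; rewrite /atomF /pupd /= (Hneg a Ha) (Hcomp _ (Hneg a Ha)) => Hia.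
    by move/Heq => /(_ (Hneg a Ha)).
Qed.
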